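(* For a given diagonal section $\delta$ the function $D_\delta\colon [0,1]^2\to[0,1]$ defined by $$D_\delta(x,y)=\begin{cases}\overline{C}_\delta(x,y); & x\le y,\\ B_\delta(x,y); & x\ge y,\end{cases}$$ (the diagonal splice of $\overline{C}_\delta$ and $B_\delta$) is a copula.
   Context: A diagonal section is a function $\delta\colon[0,1]\to[0,1]$ that is the diagonal $x\mapsto C(x,x)$ of some bivariate copula $C$; equivalently $\delta(x)\le x$ for all $x$, $0\le\delta(y)-\delta(x)\le 2(y-x)$ for $x\le y$, and $\delta(1)=1$. Write $\widehat{\delta}(x)=x-\delta(x)$. Here $\overline{C}_\delta(x,y)=\sup\{C(x,y)\colon C \text{ a copula with } C(t,t)=\delta(t)\ \forall t\}$ is the pointwise supremum of all copulas with diagonal section $\delta$, and $B_\delta$ is the Bertino copula $B_\delta(x,y)=\min\{x,y\}-\min_{t\in[\min\{x,y\},\max\{x,y\}]}\widehat{\delta}(t)$. The two functions agree on the diagonal (both equal $\delta$ there), so the splice is well defined. *)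

(* Defs.v *)
From HB Require Import structures.
From mathcomp Require Import all_boot all_order all_algebra.
From mathcomp Require Import all_classical all_reals.
Set Implicit Arguments. Unset Strict Implicit. Unset Printing Implicit Defensive.
Import Order.TTheory GRing.Theory Num.Theory.
Local Open Scope classical_set_scope.
Local Open Scope ring_scope.

Section Copulas.
Variable R : realType.

Definition unit_I (x : R) : Prop := 0 <= x <= 1.

(* A bivariate copula, viewed as a function R -> R -> R whose values
   on [0,1]^2 are the only relevant ones: boundary conditions and
   2-increasingness on [0,1]^2. *)
Definition copula (C : R -> R -> R) : Prop :=
  (forall x, unit_I x -> C x 0 = 0 /\ C 0 x = 0) /\
  (forall x, unit_I x -> C x 1 = x /\ C 1 x = x) /\
  (forall x1 x2 y1 y2, unit_I x1 -> unit_I x2 -> unit_I y1 -> unit_I y2 ->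
     x1 <= x2 -> y1 <= y2 ->
     0 <= C x2 y2 - C x2 y1 - C x1 y2 + C x1 y1).

Definition has_diagonal (C : R -> R -> R) (delta : R -> R) : Prop :=
  forall t, unit_I t -> C t t = delta t.

Definition diagonal_section (delta : R -> R) : Prop :=
  exists C, copula C /\ has_diagonal C delta.

Definition Cbar (delta : R -> R) (x y : R) : R :=
  sup [set C x y | C in [set C | copula C /\ has_diagonal C delta]].

Definition delta_hat (delta : R -> R) (t : R) : R := t - delta t.

(* Bertino copula; the minimum of the continuous function delta_hat over
   the compact interval is written as its infimum (it is attained). *)
Definition Bertino (delta : R -> R) (x y : R) : R :=
  Num.min x y -
  inf [set delta_hat delta t | t in [set t | Num.min x y <= t <= Num.max x y]].

Definition Dsplice (delta : R -> R) (x y : R) : R :=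
  if x <= y then Cbar delta x y else Bertino delta x y.

End Copulas.

(* Main.v *)
Require Import Defs.
From HB Require Import structures.
From mathcomp Require Import all_boot all_order all_algebra.
From mathcomp Require Import all_classical all_reals.
From mathcomp Require Import ring lra.
Set Implicit Arguments. Unset Strict Implicit. Unset Printing Implicit Defensive.
Import Order.TTheory GRing.Theory Num.Theory.
Local Open Scope classical_set_scope.
Local Open Scope ring_scope.

Lemma uI (R : realType) (x : R) : 0 <= x -> x <= 1 -> unit_I x.
Proof. by move=> a b; rewrite /unit_I a b. Qed.

Lemma uIP (R : realType) (x : R) : unit_I x -> 0 <= x /\ x <= 1.
Proof. by case/andP. Qed.

Definition Vol (R : realType) (C : R -> R -> R) x1 x2 y1 y2 :=
  C x2 y2 - C x2 y1 - C x1 y2 + C x1 y1.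

Section Basic.
Variable R : realType.
Implicit Types C : R -> R -> R.

Lemma cop_V C x1 x2 y1 y2 : copula C ->
  0 <= x1 -> x1 <= x2 -> x2 <= 1 -> 0 <= y1 -> y1 <= y2 -> y2 <= 1 ->
  0 <= C x2 y2 - C x2 y1 - C x1 y2 + C x1 y1.
Proof.
case=> _ [_ H] *; apply: H => //; apply: uI => //; lra.
Qed.

Lemma cop_0 C x : copula C -> 0 <= x -> x <= 1 -> C x 0 = 0 /\ C 0 x = 0.
Proof. by case=> H _ a b; apply: H; apply: uI. Qed.

Lemma cop_1 C x : copula C -> 0 <= x -> x <= 1 -> C x 1 = x /\ C 1 x = x.
Proof. by case=> _ [H _] a b; apply: H; apply: uI. Qed.

Lemma cop_mono2 C x y1 y2 : copula C -> 0 <= x -> x <= 1 ->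
  0 <= y1 -> y1 <= y2 -> y2 <= 1 -> C x y1 <= C x y2.
Proof.
move=> cC a b c d e.
have := @cop_V C 0 x y1 y2 cC (lexx 0) a b c d e.
have [_ ->] := cop_0 cC c (le_trans d e).
have [_ ->] := cop_0 cC (le_trans c d) e. lra.
Qed.

Lemma cop_mono1 C y x1 x2 : copula C -> 0 <= y -> y <= 1 ->
  0 <= x1 -> x1 <= x2 -> x2 <= 1 -> C x1 y <= C x2 y.
Proof.
move=> cC a b c d e.
have := @cop_V C x1 x2 0 y cC c d e (lexx 0) a b.
have [-> _] := cop_0 cC c (le_trans d e).
have [-> _] := cop_0 cC (le_trans c d) e. lra.
Qed.

Lemma cop_lip1 C y x1 x2 : copula C -> 0 <= y -> y <= 1 ->
  0 <= x1 -> x1 <= x2 -> x2 <= 1 -> C x2 y - C x1 y <= x2 - x1.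
Proof.
move=> cC a b c d e.
have := @cop_V C x1 x2 y 1 cC c d e a b (lexx 1).
have [-> _] := cop_1 cC c (le_trans d e).
have [-> _] := cop_1 cC (le_trans c d) e. lra.
Qed.

Lemma cop_lip2 C x y1 y2 : copula C -> 0 <= x -> x <= 1 ->
  0 <= y1 -> y1 <= y2 -> y2 <= 1 -> C x y2 - C x y1 <= y2 - y1.
Proof.
move=> cC a b c d e.
have := @cop_V C x 1 y1 y2 cC a b (lexx 1) c d e.
have [_ ->] := cop_1 cC c (le_trans d e).
have [_ ->] := cop_1 cC (le_trans c d) e. lra.
Qed.

End Basic.

Lemma mnl (R : realType) (a b : R) : a <= b -> Num.min a b = a. Proof. exact: min_l. Qed.
Lemma mnr (R : realType) (a b : R) : b < a -> Num.min a b = b. Proof. move=> h; apply: min_r; exact: ltW. Qed.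
Lemma mxl (R : realType) (a b : R) : a <= b -> Num.max a b = b. Proof. exact: max_r. Qed.
Lemma mxr (R : realType) (a b : R) : b < a -> Num.max a b = a. Proof. move=> h; apply: max_l; exact: ltW. Qed.
Lemma leor (R : realType) (a b : R) : a <= b \/ b < a.
Proof. by case: (leP a b); [left | right]. Qed.

Ltac mm := repeat match goal with
 | |- context [Num.min ?a ?b] => let H := fresh in
     have [H|H] := leor a b; [rewrite (mnl H) | rewrite (mnr H)]
 | |- context [Num.max ?a ?b] => let H := fresh in
     have [H|H] := leor a b; [rewrite (mxl H) | rewrite (mxr H)]
 | H0 : context [Num.min ?a ?b] |- _ => let H := fresh in
     have [H|H] := leor a b; [rewrite (mnl H) in H0 | rewrite (mnr H) in H0]
 | H0 : context [Num.max ?a ?b] |- _ => let H := fresh in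
     have [H|H] := leor a b; [rewrite (mxl H) in H0 | rewrite (mxr H) in H0]
 end.

Lemma split2 (R : realType) (F : R -> R -> R) :
  (forall x1 x2 y1 y2, 0 <= x1 -> x1 <= x2 -> x2 <= y1 -> y1 <= y2 -> y2 <= 1 ->
     0 <= Vol F x1 x2 y1 y2) ->
  (forall x1 x2 y1 y2, 0 <= y1 -> y1 <= y2 -> y2 <= x1 -> x1 <= x2 -> x2 <= 1 ->
     0 <= Vol F x1 x2 y1 y2) ->
  (forall a b, 0 <= a -> a <= b -> b <= 1 -> 0 <= Vol F a b a b) ->
  forall x1 x2 y1 y2, 0 <= x1 -> x1 <= x2 -> x2 <= 1 -> 0 <= y1 -> y1 <= y2 -> y2 <= 1 ->
     0 <= Vol F x1 x2 y1 y2.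
Proof.
move=> UT LT SQ x1 x2 y1 y2 a b c e f g.
have deg1 u v w : Vol F u u v w = 0 by rewrite /Vol; ring.
have deg2 u v w : Vol F u v w w = 0 by rewrite /Vol; ring.
have sx u v w y z : Vol F u w y z = Vol F u v y z + Vol F v w y z by rewrite /Vol; ring.
have sy u v w y z : Vol F y z u w = Vol F y z u v + Vol F y z v w by rewrite /Vol; ring.
case: (leP x2 y1) => h1; first exact: UT.
case: (leP y2 x1) => h2; first exact: LT.
(* reduce to common lower corner a0 *)
have [a0 [H1 [H2 [H3 H4]]]] : exists a0, 0 <= Vol F x1 a0 y1 y2 /\ 0 <= Vol F a0 x2 y1 a0
   /\ Vol F x1 x2 y1 y2 = Vol F x1 a0 y1 y2 + Vol F a0 x2 y1 a0 + Vol F a0 x2 a0 y2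
   /\ (x1 <= a0 /\ y1 <= a0 /\ a0 <= x2 /\ a0 <= y2).
  case: (leP x1 y1) => h3.
    exists y1; split; first by apply: UT => //; lra.
    split; first by rewrite deg2.
    split; first by rewrite /Vol; ring.
    lra.
  exists x1; split; first by rewrite deg1.
  split; first by apply: LT => //; lra.
  split; first by rewrite /Vol; ring.
  lra.
case: H4 => [k1 [k2 [k3 k4]]].
have : 0 <= Vol F a0 x2 a0 y2.
  case: (leP x2 y2) => h3.
    have -> : Vol F a0 x2 a0 y2 = Vol F a0 x2 a0 x2 + Vol F a0 x2 x2 y2 by rewrite /Vol; ring.
    have := SQ a0 x2 ltac:(lra) k3 ltac:(lra).
    have := UT a0 x2 x2 y2 ltac:(lra) k3 (lexx _) h3 g; lra.
  have -> : Vol F a0 x2 a0 y2 = Vol F a0 y2 a0 y2 + Vol F y2 x2 a0 y2 by rewrite /Vol; ring.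
  have := SQ a0 y2 ltac:(lra) k4 g.
  have := LT y2 x2 a0 y2 ltac:(lra) k4 (lexx _) (ltW h3) c; lra.
rewrite H3; lra.
Qed.

Section Main.
Variable R : realType.
Variable d : R -> R.
Implicit Types C : R -> R -> R.

Definition dgood : Prop :=
  d 0 = 0 /\ d 1 = 1 /\
  (forall s t, 0 <= s -> s <= t -> t <= 1 -> d s <= d t /\ d t - d s <= 2 * (t - s)) /\
  (forall t, 0 <= t -> t <= 1 -> d t <= t).

Definition inS C := copula C /\ has_diagonal C d.

Lemma inS_diag C t : inS C -> 0 <= t -> t <= 1 -> C t t = d t.
Proof. by case=> _ H a b; apply: H; apply: uI. Qed.

Lemma diag_good : diagonal_section d -> dgood.
Proof.
case=> C [cC hC].
have dg t : 0 <= t -> t <= 1 -> C t t = d t by move=> a b; apply: hC; apply: uI.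
split; first by rewrite -dg ?lexx ?ler01 //; have [-> _] := cop_0 cC (lexx 0) ler01.
split; first by rewrite -dg ?lexx ?ler01 //; have [-> _] := cop_1 cC ler01 (lexx 1).
split.
  move=> s t a b c; rewrite -!dg; try lra.
  have h1 := cop_mono2 cC a (le_trans b c) a b c.
  have h2 := cop_mono1 cC (le_trans a b) c a b c.
  have h3 := cop_lip1 cC (le_trans a b) c a b c.
  have h4 := cop_lip2 cC a (le_trans b c) a b c.
  split; lra.
move=> t a b; rewrite -dg //.
have := cop_mono2 cC a b a b (lexx 1).
by have [-> _] := cop_1 cC a b.
Qed.

Lemma cop_incd C x s t : inS C -> 0 <= x -> x <= s -> s <= t -> t <= 1 ->
  C x t - C x s <= d t - d s.
Proof.
move=> SC a b c e; have cC := SC.1.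
have := @cop_V R C x t s t cC a (le_trans b c) e (le_trans a b) c e.
have := cop_mono1 cC (le_trans a b) (le_trans c e) (le_trans a b) c e.
rewrite !(inS_diag SC) //; try lra.
Qed.

Lemma cop_lex C x y : copula C -> 0 <= x -> x <= 1 -> 0 <= y -> y <= 1 -> C x y <= x.
Proof.
move=> cC a b c e; have := cop_mono2 cC a b c e (lexx 1).
by have [-> _] := cop_1 cC a b.
Qed.


Definition adm (f : R -> R) : Prop := f 0 = 0 /\
  forall s t, 0 <= s -> s <= t -> t <= 1 -> f t - f s <= Num.min (t - s) (d t - d s).

Definition cf (y : R) : R := sup [set f y | f in adm].

Section WithGood.
Variable dg : dgood.

Lemma dmono s t : 0 <= s -> s <= t -> t <= 1 -> d s <= d t.
Proof. by move=> a b c; case: dg => _ [_ [H _]]; case: (H s t a b c). Qed.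

Lemma dlip s t : 0 <= s -> s <= t -> t <= 1 -> d t - d s <= 2 * (t - s).
Proof. by move=> a b c; case: dg => _ [_ [H _]]; case: (H s t a b c). Qed.

Lemma dle t : 0 <= t -> t <= 1 -> d t <= t.
Proof. by case: dg => _ [_ [_ H]]; apply: H. Qed.

Lemma d0 : d 0 = 0. Proof. by case: dg. Qed.
Lemma d1 : d 1 = 1. Proof. by case: dg => _ []. Qed.

Lemma adm0 : adm (fun _ => 0).
Proof.
split=> // s t a b c; have := dmono a b c; move=> ?; mm; lra.
Qed.

Lemma adm_le f y : adm f -> 0 <= y -> y <= 1 -> f y <= y.
Proof.
case=> f0 H a b; have := H 0 y (lexx 0) a b; rewrite f0 => ?; mm; lra.
Qed.

Lemma cf_ne y : [set f y | f in adm] !=set0.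
Proof. by exists 0; exists (fun _ => 0) => //; apply: adm0. Qed.

Lemma cf_ub f y : adm f -> 0 <= y -> y <= 1 -> f y <= cf y.
Proof.
move=> af a b; apply: (ub_le_sup); last by exists f.
by exists 1 => _ [g ag <-]; have := adm_le ag a b; lra.
Qed.

Lemma cf_le y x : (forall f, adm f -> f y <= x) -> cf y <= x.
Proof. by move=> H; apply: ge_sup; [apply: cf_ne | move=> _ [g ag <-]; apply: H]. Qed.


Lemma cf_inc_le s t : 0 <= s -> s <= t -> t <= 1 ->
  cf t - cf s <= Num.min (t - s) (d t - d s).
Proof.
move=> a b c.
suff: cf t <= cf s + Num.min (t - s) (d t - d s) by lra.
apply: cf_le => f af.
have := af.2 s t a b c; have := cf_ub af a (le_trans b c); lra.
Qed.

Lemma cf_inc_ge s t : 0 <= s -> s <= t -> t <= 1 ->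
  Num.max 0 ((d t - t) - (d s - s)) <= cf t - cf s.
Proof.
move=> a b c.
suff: cf s <= cf t - Num.max 0 ((d t - t) - (d s - s)) by lra.
apply: cf_le => g ag.
pose g' := fun u => g (Num.min u s) + Num.max 0 ((d (Num.max u s) - Num.max u s) - (d s - s)).
have ag' : adm g'.
  split.
    rewrite /g'; have := ag.1; mm; lra.
  move=> u v u0 uv v1; rewrite /g'.
  case: (leP v s) => vs.
    have := ag.2 u v u0 uv v1; mm; lra.
  case: (leP s u) => su.
    have := dlip u0 uv v1; have := dmono u0 uv v1; mm; lra.
  have := ag.2 u s u0 (ltW su) (le_trans (ltW vs) v1).
  have := dlip a (ltW vs) v1; have := dmono a (ltW vs) v1.
  have := dmono u0 (ltW su) (le_trans (ltW vs) v1).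
  mm; lra.
have e1 : Num.min t s = s by mm; lra.
have e2 : Num.max t s = t by mm; lra.
have := cf_ub ag' (le_trans a b) c; rewrite /g'; cbv beta; rewrite e1 e2.
lra.
Qed.


Lemma cop_bound C x y : inS C -> 0 <= x -> x <= y -> y <= 1 ->
  C x y - d x <= cf y - cf x.
Proof.
move=> SC a b c; have cC := SC.1.
suff: cf x <= cf y - (C x y - d x) by lra.
apply: cf_le => g ag.
pose f := fun u => if u <= x then g u else g x + C x u - d x.
have Cxx : C x x = d x by apply: (inS_diag SC) => //; lra.
have af : adm f.
  split; first by rewrite /f a; exact: ag.1.
  move=> u v u0 uv v1; rewrite /f.
  case: (leP v x) => vx.
    rewrite (le_trans uv vx); exact: ag.2 u v u0 uv v1.
  case: (leP u x) => ux.
    have := ag.2 u x u0 ux (le_trans (ltW vx) v1).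
    have := cop_lip2 cC a (le_trans b c) a (ltW vx) v1.
    have := cop_incd SC a (lexx x) (ltW vx) v1.
    rewrite Cxx => *; mm; lra.
  have := cop_lip2 cC a (le_trans b c) (le_trans a (ltW ux)) uv v1.
  have := cop_incd SC a (ltW ux) uv v1.
  move=> *; mm; lra.
have := cf_ub af (le_trans a b) c; rewrite /f; cbv beta.
case: (leP y x) => yx.
  have xy : x = y by apply/eqP; rewrite eq_le b yx.
  by rewrite -xy Cxx; lra.
lra.
Qed.

Definition m (a b : R) : R := inf [set delta_hat d t | t in [set t | a <= t <= b]].

Lemma h_ge0 t : 0 <= t -> t <= 1 -> 0 <= delta_hat d t.
Proof. by move=> a b; have := dle a b; rewrite /delta_hat; lra. Qed.

Lemma m_lb a b t : 0 <= a -> b <= 1 -> a <= t -> t <= b -> m a b <= delta_hat d t.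
Proof.
move=> a0 b1 hat tb; apply: ge_inf; last by exists t => //; apply/andP.
exists 0 => _ [u /andP [au ub] <-]; apply: h_ge0; lra.
Qed.

Lemma m_ge a b L : a <= b -> (forall t, a <= t -> t <= b -> L <= delta_hat d t) -> L <= m a b.
Proof.
move=> ab H; apply: lb_le_inf; first by exists (delta_hat d a); exists a => //; apply/andP; rewrite lexx ab.
by move=> _ [u /andP [au ub] <-]; apply: H.
Qed.

Lemma m_split a b c : 0 <= a -> a <= b -> b <= c -> c <= 1 ->
  m a c = Num.min (m a b) (m b c).
Proof.
move=> a0 ab bc c1; apply/eqP; rewrite eq_le; apply/andP; split.
  rewrite le_min; apply/andP; split; apply: m_ge => // t h1 h2; apply: m_lb; lra.
apply: m_ge; first lra.
move=> t h1 h2; case: (leP t b) => tb.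
  have := m_lb a0 (le_trans bc c1) h1 tb; mm; lra.
have := m_lb (le_trans a0 ab) c1 (ltW tb) h2; mm; lra.
Qed.

Lemma m_pt t : 0 <= t -> t <= 1 -> m t t = delta_hat d t.
Proof.
move=> a b; apply/eqP; rewrite eq_le m_lb ?lexx //=.
by apply: m_ge => // u h1 h2; have -> : u = t by apply/eqP; rewrite eq_le h2 h1.
Qed.

Lemma m_0 x : 0 <= x -> x <= 1 -> m 0 x = 0.
Proof.
move=> a b; apply/eqP; rewrite eq_le; apply/andP; split.
  by have := m_lb (lexx 0) b (lexx 0) a; rewrite /delta_hat d0 subr0.
by apply: m_ge => // t h1 h2; apply: h_ge0; lra.
Qed.

Lemma m_1 x : 0 <= x -> x <= 1 -> m x 1 = 0.
Proof.
move=> a b; apply/eqP; rewrite eq_le; apply/andP; split.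
  by have := m_lb a (lexx 1) b (lexx 1); rewrite /delta_hat d1 subrr.
by apply: m_ge => // t h1 h2; apply: h_ge0; lra.
Qed.

Lemma bert_eq x y : y <= x -> Bertino d x y = y - m y x.
Proof.
move=> yx; rewrite /Bertino /m.
have e1 : Num.min x y = y by mm; lra.
have e2 : Num.max x y = x by mm; lra.
by rewrite e1 e2.
Qed.


Definition G x y := Num.min x (d x + cf y - cf x).
Definition F x y := if x <= y then G x y else Bertino d x y.

Lemma F_up x y : x <= y -> F x y = G x y.
Proof. by move=> h; rewrite /F h. Qed.

Lemma F_diag t : 0 <= t -> t <= 1 -> F t t = d t.
Proof. by move=> a b; rewrite F_up // /G; have := dle a b; mm; lra. Qed.

Lemma F_low x y : 0 <= y -> y <= x -> x <= 1 -> F x y = y - m y x.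
Proof.
move=> a b c; case: (leP x y) => h.
  have e : x = y by apply/eqP; rewrite eq_le h b.
  rewrite -e F_diag ?m_pt //; try lra; rewrite /delta_hat; lra.
by rewrite /F leNgt h /= bert_eq.
Qed.

Lemma F_copula : copula F.
Proof.
split.
  move=> x /uIP [a b]; split.
    case: (leP x 0) => h.
      have -> : x = 0 by apply/eqP; rewrite eq_le h a.
      by rewrite F_diag ?d0 ?lexx ?ler01.
    by rewrite F_low ?lexx ?m_0 ?subr0 //; lra.
  rewrite F_up // /G; have := cf_inc_ge (lexx 0) a b; rewrite d0; mm; lra.
split.
  move=> x /uIP [a b]; split.
    rewrite F_up // /G; have := cf_inc_ge a b (lexx 1); rewrite d1; mm; lra.
  case: (leP 1 x) => h.
    have -> : x = 1 by apply/eqP; rewrite eq_le h b.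
    by rewrite F_diag ?d1 ?lexx ?ler01.
  by rewrite F_low ?m_1 ?subr0 //; lra.
move=> x1 x2 y1 y2 /uIP [? ?] /uIP [? ?] /uIP [? ?] /uIP [? ?] ? ?.
have := @split2 R F _ _ _ x1 x2 y1 y2; rewrite /Vol; apply => //.
- move=> u1 u2 v1 v2 a b c e f; rewrite /Vol !F_up; try lra.
  rewrite /G.
  have := cf_inc_ge a b (le_trans c (le_trans e f)).
  have := cf_inc_ge (le_trans a (le_trans b c)) e f.
  mm; lra.
- move=> u1 u2 v1 v2 a b c e f; rewrite /Vol !F_low; try lra.
  rewrite (m_split a b (le_trans c e) f) (m_split (le_trans a b) c e f).
  rewrite (m_split a b c (le_trans e f)).
  mm; lra.
- move=> a b a0 ab b1; rewrite /Vol.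
  have e1 := F_diag a0 (le_trans ab b1); have e2 := F_diag (le_trans a0 ab) b1.
  have e3 := F_up ab; have e4 := F_low a0 ab b1.
  have : cf b - cf a - d b + a <= m a b.
    apply: m_ge; first exact: ab.
    move=> t h1 h2.
    have := cf_inc_le (le_trans a0 h1) h2 b1.
    have := cf_inc_le a0 h1 (le_trans h2 b1).
    rewrite /delta_hat; mm; lra.
  move: e3; rewrite /G; mm; lra.
Qed.

Lemma F_inS : inS F.
Proof. by split; [exact: F_copula | move=> t /uIP [a b]; exact: F_diag]. Qed.

Lemma Cbar_eq x y : 0 <= x -> x <= y -> y <= 1 -> Cbar d x y = G x y.
Proof.
move=> a b c; rewrite /Cbar.
have ub : ubound [set C x y | C in [set C | copula C /\ has_diagonal C d]] (G x y).
  move=> _ [C SC <-]; rewrite /G.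
  have := cop_bound SC a b c; have := cop_lex SC.1 a (le_trans b c) (le_trans a b) c.
  mm; lra.
apply/eqP; rewrite eq_le; apply/andP; split.
  by apply: ge_sup => //; exists (F x y); exists F => //; exact: F_inS.
apply: ub_le_sup; first by exists (G x y).
by exists F; [exact: F_inS | exact: F_up].
Qed.

End WithGood.
End Main.

Lemma copula_ext (R : realType) (C D : R -> R -> R) :
  (forall x y, unit_I x -> unit_I y -> C x y = D x y) -> copula C -> copula D.
Proof.
move=> E [H1 [H2 H3]].
have u0 : unit_I (0:R) by apply: uI; lra.
have u1 : unit_I (1:R) by apply: uI; lra.
split.
  by move=> x hx; rewrite -(E x 0) // -(E 0 x) //; exact: H1.
split.
  by move=> x hx; rewrite -(E x 1) // -(E 1 x) //; exact: H2.
move=> x1 x2 y1 y2 h1 h2 h3 h4 h5 h6.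
rewrite -(E x2 y2) // -(E x2 y1) // -(E x1 y2) // -(E x1 y1) //; exact: H3.
Qed.

Theorem proposition4p3 (R : realType) (delta : R -> R) :
  diagonal_section delta -> copula (Dsplice delta).
Proof.
move=> ds; have dg := diag_good ds.
apply: (copula_ext _ (F_copula dg)).
move=> x y /uIP [a b] /uIP [c e]; rewrite /Dsplice.
have [h|h] := leor x y.
  by rewrite h (Cbar_eq dg a h e) (F_up _ h).
by rewrite (leNgt x y) h /F (leNgt x y) h.
Qed.
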